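(* Assume the standing setting of the context, and let $\varrho,\sigma$ be continuous strictly positive densities on $D\times(0,T)$ (with respect to Lebesgue measure) of two measures in $\mathbb{M}_\nu$; set $v=\sigma/\varrho$. Suppose that for a.e. $t\in(0,T)$ $$\int_D\varrho(x,t)\,dx=\nu(D)+\int_0^t\int_Dc\,\varrho\,dx\,ds,\qquad \int_D\sigma(x,t)\,dx\le\nu(D)+\int_0^t\int_Dc\,\sigma\,dx\,ds,$$ and that for every $\lambda>0$ and a.e. $t\in(0,T)$ $$\int_De^{\lambda(1-v(x,t))}\varrho(x,t)\,dx\le1.$$ Then $v\equiv1$ on $D\times(0,T)$, i.e. $\sigma=\varrho$.
   Context: $T>0$; $D\subset\mathbb{R}^d$ open with exhaustion $(D_k)$ (bounded open, increasing, $\overline{D_k}\subset D_{k+1}$, $\bigcup D_k=D$); $\nu$ a Borel probability measure on $D$; $c\le0$. Coefficients $a^{ij},b^i,c$ Borel on $D\times[0,T]$, $A=(a^{ij})$ symmetric, satisfying (H1): for each $k$ there are $m_k,M_k>0$ with $m_k|y|^2\le(A(x,t)y,y)\le M_k|y|^2$ on $D_k\times[0,T]$; and (H2): for each $k$ there is $\Lambda_k$ with $|a^{ij}(x,t)-a^{ij}(y,t)|\le\Lambda_k|x-y|$ for $x,y\in D_k$, $t\in[0,T]$. Moreover $b\in L^p_{loc}(D\times(0,T))$, $c\in L^{p/2}_{loc}(D\times(0,T))$ for some $p>d+2$. $L\varphi=a^{ij}\partial_{x_i}\partial_{x_j}\varphi+b^i\partial_{x_i}\varphi+c\varphi$. Solutions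 of the Cauchy problem $\partial_t\mu=\partial_{x_i}\partial_{x_j}(a^{ij}\mu)-\partial_{x_i}(b^i\mu)+c\mu$, $\mu|_{t=0}=\nu$, are flows $(\mu_t)$ of Borel measures on $D$ (with $t\mapsto\mu_t(B)$ measurable, $\mu=\mu_t\,dt$ locally finite on $D\times(0,T)$) such that $a^{ij},b^i,c\in L^1(\overline{D_k}\times J,|\mu|)$ for all $k$ and compact $J\subset(0,T)$ and for every $\varphi\in C_0^\infty(D)$ and a.e. $t$: $\int\varphi\,d\mu_t-\int\varphi\,d\nu=\lim_{\varepsilon\to0+}\int_\varepsilon^t\int_DL\varphi\,d\mu_s\,ds$. $\mathcal{M}_\nu$: such solutions with $\mu_t\ge0$, $|c|\in L^1(\mu)$ and $\mu_t(D)\le\nu(D)+\int_0^t\int_Dc\,d\mu_s\,ds$ for a.e. $t$. $\mathbb{M}_\nu$: those $\mu\in\mathcal{M}_\nu$ with $b\in L^2(\mu,D_k\times[0,T])$ for all $k$. *)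

(* Defs.v *)
From HB Require Import structures.
From mathcomp Require Import all_boot all_order all_algebra.
From mathcomp Require Import all_classical all_reals all_analysis.
From mathcomp Require Import measurable_realfun.
Set Implicit Arguments. Unset Strict Implicit. Unset Printing Implicit Defensive.
Import Order.TTheory GRing.Theory Num.Theory.
Import numFieldNormedType.Exports.
Local Open Scope classical_set_scope.
Local Open Scope ring_scope.

Definition Rd (R : realType) (d : nat) : measurableType _ :=
  g_sigma_algebraType (@open 'rV[R]_d).

Definition esq (R : realType) (d : nat) (y : 'rV[R]_d) : R := \sum_(i < d) y 0 i ^+ 2.
Definition enorm (R : realType) (d : nat) (y : 'rV[R]_d) : R := Num.sqrt (esq y).

(* mu is the (Borel) Lebesgue measure on R^d: it gives closed boxes their volume.
   (Such a measure exists and is unique on the Borel sets.) *)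
Definition is_lebesgue_Rd (R : realType) (d : nat)
  (mu : {measure set (Rd R d) -> \bar R}) : Prop :=
  forall a b : 'rV[R]_d, (forall i, a 0 i <= b 0 i) ->
    mu [set x : 'rV[R]_d | forall i, a 0 i <= x 0 i <= b 0 i] =
      (\prod_(i < d) (b 0 i - a 0 i))%:E.

Definition ee (R : realType) (d : nat) (i : 'I_d) : 'rV[R]_d := delta_mx 0 i.

Fixpoint pder (R : realType) (d : nat) (l : seq 'I_d) (f : 'rV[R]_d -> R)
  : 'rV[R]_d -> R :=
  match l with
  | [::] => f
  | i :: l' => fun x => 'D_(ee R i) (pder l' f) x
  end.

Definition smooth (R : realType) (d : nat) (f : 'rV[R]_d -> R) : Prop :=
  forall l : seq 'I_d, continuous (pder l f) /\
    (forall (i : 'I_d) (x : 'rV[R]_d), derivable (pder l f) x (ee R i)).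

Definition Cc_infty (R : realType) (d : nat) (D : set 'rV[R]_d) (phi : 'rV[R]_d -> R)
  : Prop :=
  smooth phi /\ exists K : set 'rV[R]_d,
    compact K /\ K `<=` D /\ (forall x, ~ K x -> phi x = 0).

Section Kolmogorov.
Context (R : realType) (d : nat).
Local Notation V := 'rV[R]_d.

Definition Lop (a : 'I_d -> 'I_d -> V -> R -> R) (b : 'I_d -> V -> R -> R)
  (c : V -> R -> R) (phi : V -> R) (x : V) (t : R) : R :=
  \sum_(i < d) \sum_(j < d) a i j x t * pder [:: i; j] phi x
  + \sum_(i < d) b i x t * pder [:: i] phi x + c x t * phi x.

Definition dint (leb : {measure set (Rd R d) -> \bar R}) (K : set V) (J : set R)
  (f : V -> R -> R) : \bar R :=
  (\int[lebesgue_measure]_(s in J) \int[leb]_(x in (K : set (Rd R d))) (f x s)%:E)%E.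

Definition cpt_sub (T : R) (J : set R) := compact J /\ J `<=` `]0, T[.

(* The measure mu(dx dt) = rho(x,t) dx dt (mu_t(dx) = rho(x,t) dx) belongs to
   the class \mathbb{M}_nu of the paper (rho is assumed nonnegative). *)
Definition MMnu (leb : {measure set (Rd R d) -> \bar R}) (T : R) (D : set V)
  (Dk : nat -> set V) (nu : {measure set (Rd R d) -> \bar R})
  (a : 'I_d -> 'I_d -> V -> R -> R) (b : 'I_d -> V -> R -> R) (c : V -> R -> R)
  (rho : V -> R -> R) : Prop :=
  (forall x t, D x -> 0 < t < T -> 0 <= rho x t) /\
  (forall B : set (Rd R d), measurable B -> B `<=` D ->
     measurable_fun `]0, T[ ((fun t : R => \int[leb]_(x in B) (rho x t)%:E)%E : R -> \bar R)) /\
  (forall K J, compact K -> K `<=` D -> cpt_sub T J ->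
     (dint leb K J rho < +oo)%E) /\
  (forall k J, cpt_sub T J ->
     (forall i j, dint leb (closure (Dk k)) J (fun x s => `|a i j x s| * rho x s)%R < +oo)%E
     /\ (forall i, dint leb (closure (Dk k)) J (fun x s => `|b i x s| * rho x s)%R < +oo)%E
     /\ (dint leb (closure (Dk k)) J (fun x s => `|c x s| * rho x s)%R < +oo)%E) /\
  (* the Fokker-Planck-Kolmogorov equation with initial condition nu *)
  (forall phi, Cc_infty D phi ->
     {ae lebesgue_measure, forall t, (0 < t < T)%R ->
        ((fun e => dint leb D [set` `[e, t]%R] (fun x s => Lop a b c phi x s * rho x s)%R)
           @ 0^'+ -->
         (\int[leb]_(x in (D : set (Rd R d))) (phi x * rho x t)%R%:E
           - \int[nu]_(x in (D : set (Rd R d))) (phi x)%:E)%E)}) /\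
  (dint leb D [set` `]0, T[%R] (fun x s => `|c x s| * rho x s)%R < +oo)%E /\
  {ae lebesgue_measure, forall t, (0 < t < T)%R ->
     (\int[leb]_(x in (D : set (Rd R d))) (rho x t)%:E
       <= nu D + dint leb D [set` `]0, t[%R] (fun x s => c x s * rho x s)%R)%E} /\
  (forall k, (dint leb (Dk k) [set` `[0, T]%R] (fun x s => esq (\row_i b i x s) * rho x s)%R
               < +oo)%E).

End Kolmogorov.

(* Main.v *)
Require Import Defs.
From HB Require Import structures.
From mathcomp Require Import all_boot all_order all_algebra.
From mathcomp Require Import all_classical all_reals all_analysis.
From mathcomp Require Import measurable_realfun.
From mathcomp Require Import ring lra.
Import Order.TTheory GRing.Theory Num.Theory.
Import numFieldNormedType.Exports.
Local Open Scope classical_set_scope.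
Local Open Scope ring_scope.
Set Implicit Arguments. Unset Strict Implicit.
Lemma openDT (R : realType) d (D : set 'rV[R]_d) (T : R) :
  open D -> open (D `*` `]0, T[%classic : set ('rV[R]_d * R)).
Proof.
move=> oD; rewrite openE => -[x t] [/= Dx tT].
rewrite /interior.
exists (D, `]0, T[%classic) => //=.
split => //. exact: oD.
apply: near_in_itvoo. done.
Qed.
Lemma near_box (R : realType) d (x0 : 'rV[R]_d) (t0 : R) (P : 'rV[R]_d * R -> Prop) :
  (\forall z \near (x0, t0), P z) ->
  exists2 e : R, 0 < e & forall (y : 'rV[R]_d) s, (forall i, `|y 0 i - x0 0 i| <= e) -> `|s - t0| < e -> P (y, s).
Proof.
move=> /nbhs_ballP [e /= e0 He].
have e2 : 0 < e / 2 by rewrite divr_gt0.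
have lt2 : e / 2 < e by rewrite ltr_pdivrMr // ltr_pMr // ltr1n.
exists (e / 2) => // y s hy hs; apply: He.
split.
- split => // i j; rewrite (ord1 i) /ball /= distrC.
  exact: le_lt_trans (hy j) lt2.
- by rewrite /ball /= distrC (lt_trans hs lt2).
Qed.
Lemma open_mRd (R : realType) d (A : set 'rV[R]_d) : open A -> measurable (A : set (Rd R d)).
Proof. by move=> oA; apply: sub_sigma_algebra. Qed.

Definition box (R : realType) d (x0 : 'rV[R]_d) (e : R) : set 'rV[R]_d :=
  [set y | forall i, x0 0 i - e <= y 0 i <= x0 0 i + e].

Lemma closed_box (R : realType) d (x0 : 'rV[R]_d) (e : R) : closed (box x0 e).
Proof.
have -> : box x0 e = \bigcap_(i in setT) ((fun y : 'rV[R]_d => y 0 i) @^-1` [set r | x0 0 i - e <= r] `&`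
     (fun y : 'rV[R]_d => y 0 i) @^-1` [set r | r <= x0 0 i + e]).
  rewrite /box; apply/seteqP; split => y /=.
    by move=> H i _; have /andP[? ?] := H i; split.
  by move=> H i; have [/= ? ?] := H i I; apply/andP; split.
apply: closed_bigI => i _; apply: closedI; apply: preimage_closed.
- by move=> y _; apply: coord_continuous.
- exact: closed_ge.
- by move=> y _; apply: coord_continuous.
- exact: closed_le.
Qed.

Lemma mbox (R : realType) d (x0 : 'rV[R]_d) (e : R) : measurable (box x0 e : set (Rd R d)).
Proof.
rewrite -[box x0 e]setCK; apply: measurableC; apply: open_mRd.
apply: closed_openC; exact: closed_box.
Qed.

Lemma leb_box (R : realType) d (leb : {measure set (Rd R d) -> \bar R}) (x0 : 'rV[R]_d) (e : R) :
  is_lebesgue_Rd leb -> 0 < e -> leb (box x0 e : set (Rd R d)) = ((e *+ 2) ^+ d)%:E.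
Proof.
move=> hl e0.
have := hl (\row_i (x0 0 i - e)) (\row_i (x0 0 i + e)).
rewrite /box.
have -> : [set x : 'rV[R]_d | forall i, (\row_i0 (x0 0 i0 - e)) 0 i <= x 0 i <= (\row_i0 (x0 0 i0 + e)) 0 i]
   = [set y | forall i, x0 0 i - e <= y 0 i <= x0 0 i + e].
  by apply/seteqP; split => y /= H i; move: (H i); rewrite !mxE.
move=> ->.
- congr (_%:E); rewrite (eq_bigr (fun _ => e *+ 2)) ?prodr_const ?card_ord // => i _.
  by rewrite !mxE mulr2n; lra.
- move=> i; rewrite !mxE lerD2l; apply: (le_trans (y := 0)); rewrite ?oppr_le0 ltW //.
Qed.
Section mono.
Local Open Scope ereal_scope.
Context dd (T : measurableType dd) (R : realType) (mu : {measure set T -> \bar R}).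

Lemma ge0_le_integral_nm (D : set T) (f g : T -> \bar R) :
  (forall x, D x -> 0 <= f x) -> (forall x, D x -> f x <= g x) ->
  \int[mu]_(x in D) f x <= \int[mu]_(x in D) g x.
Proof.
move=> f0 fg.
have g0 : forall x, D x -> 0 <= g x by move=> x Dx; exact: le_trans (f0 _ Dx) (fg _ Dx).
rewrite !ge0_integralE//; apply: le_ereal_sup => _ [h /= hf <-]; exists h => //= x.
apply: le_trans (hf x) _; rewrite /patch; case: ifP => // /set_mem Dx; exact: fg.
Qed.

Lemma le_integral_nm (D : set T) (f g : T -> \bar R) :
  (forall x, D x -> f x <= g x) ->
  \int[mu]_(x in D) f x <= \int[mu]_(x in D) g x.
Proof.
move=> fg; rewrite (integralE _ _ f) (integralE _ _ g); apply: leeB.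
- apply: ge0_le_integral_nm => x Dx; first exact: funepos_ge0.
  by apply: (@funepos_le _ _ D) => //; [move=> y /set_mem Dy; exact: fg|exact/mem_set].
- apply: ge0_le_integral_nm => x Dx; first exact: funeneg_ge0.
  by apply: (@funeneg_le _ _ D) => //; [move=> y /set_mem Dy; exact: fg|exact/mem_set].
Qed.
End mono.
Lemma cont_meas (R : realType) d (D : set 'rV[R]_d) (f : 'rV[R]_d -> R) :
  open D -> (forall y, D y -> {for y, continuous f}) ->
  measurable_fun (D : set (Rd R d)) (f : Rd R d -> R).
Proof.
move=> oD cf; apply: (measurability _ (RGenOpens.measurableE R)).
move=> _ [_ [a [b ->]] <-].
suff o : open (D `&` f @^-1` `]a, b[ : set 'rV[R]_d) by exact: open_mRd o.
rewrite openE => y [Dy /= fy].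
apply: filterI; first exact: oD.
apply: (cf y Dy); apply: interval_open => //.
Qed.
Lemma ae_itv (R : realType) (Q : R -> Prop) (t0 e : R) : 0 < e ->
  {ae lebesgue_measure, forall t, Q t} -> exists t, `|t - t0| < e /\ Q t.
Proof.
move=> e0 [N [mN N0 sN]].
apply: contrapT => hno.
have sub : `](t0 - e), (t0 + e)[ `<=` N.
  move=> s /=; rewrite in_itv /= => /andP[h1 h2]; apply: sN => /= Qs; apply: hno.
  by exists s; split => //; rewrite ltr_norml; apply/andP; split; lra.
have := le_measure lebesgue_measure (mem_set (measurable_itv `](t0 - e), (t0 + e)[)) (mem_set mN) sub.
rewrite /= N0 lebesgue_measure_itv /= lte_fin.
have -> : t0 - e < t0 + e by lra.
by rewrite -EFinD lee_fin; lra.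
Qed.

Lemma cvg_sec (R : realType) d (F : 'rV[R]_d * R -> R) (y : 'rV[R]_d) (t : R) :
  {for (y, t), continuous F} -> {for y, continuous (fun y => F (y, t))}.
Proof.
move=> cF.
have h : {for y, continuous (fun y0 : 'rV[R]_d => (y0, t))}.
  exact: (@cvg_pair _ _ _ (nbhs y) (nbhs y) (nbhs t) _ _ _ id (fun=> t) cvg_id (cvg_cst t)).
exact: (continuous_comp h cF).
Qed.

Lemma ae_itv' (R : realType) (Q : set R) (t0 e : R) : 0 < e ->
  almost_everywhere lebesgue_measure Q -> exists t, `|t - t0| < e /\ Q t.
Proof. by move=> e0 hQ; exact: (@ae_itv R (fun t => Q t) t0 e e0 hQ). Qed.

Unset Implicit Arguments.

Theorem lemma4p1 (R : realType) (d : nat) (T : R) (D : set 'rV[R]_d)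
  (Dk : nat -> set 'rV[R]_d)
  (leb : {measure set (Rd R d) -> \bar R})
  (nu : {measure set (Rd R d) -> \bar R})
  (a : 'I_d -> 'I_d -> 'rV[R]_d -> R -> R) (b : 'I_d -> 'rV[R]_d -> R -> R)
  (c : 'rV[R]_d -> R -> R) (p : R)
  (rho sigma : 'rV[R]_d -> R -> R) :
  0 < T ->
  open D ->
  (* exhaustion of D *)
  (forall k, open (Dk k) /\ [bounded x | x in Dk k]) ->
  (forall k, closure (Dk k) `<=` Dk k.+1) ->
  \bigcup_k Dk k = D ->
  (* Lebesgue measure on R^d *)
  is_lebesgue_Rd leb ->
  (* nu: Borel probability measure on D *)
  nu setT = 1%E -> nu (~` D) = 0%E ->
  (* coefficients: Borel on D x [0,T] *)
  (forall i j, measurable_fun (D `*` `[0, T]%classic : set (Rd R d * R))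
                 (fun z : Rd R d * R => a i j z.1 z.2)) ->
  (forall i, measurable_fun (D `*` `[0, T]%classic : set (Rd R d * R))
                 (fun z : Rd R d * R => b i z.1 z.2)) ->
  measurable_fun (D `*` `[0, T]%classic : set (Rd R d * R))
                 (fun z : Rd R d * R => c z.1 z.2) ->
  (* A symmetric *)
  (forall i j x t, a i j x t = a j i x t) ->
  (* (H1) *)
  (forall k, exists m M : R, 0 < m /\ 0 < M /\
     forall x t (y : 'rV[R]_d), Dk k x -> 0 <= t <= T ->
       m * esq y <= \sum_(i < d) \sum_(j < d) a i j x t * y 0 i * y 0 j <= M * esq y) ->
  (* (H2) *)
  (forall k, exists L : R, forall i j x y t, Dk k x -> Dk k y -> 0 <= t <= T ->
     `|a i j x t - a i j y t| <= L * enorm (x - y)) ->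
  (* b in L^p_loc, c in L^{p/2}_loc, p > d + 2 *)
  (d%:R + 2 < p) ->
  (forall K J, compact K -> K `<=` D -> cpt_sub T J ->
     (dint leb K J (fun x s => enorm (\row_i b i x s) `^ p)%R < +oo)%E) ->
  (forall K J, compact K -> K `<=` D -> cpt_sub T J ->
     (dint leb K J (fun x s => `|c x s| `^ (p / 2))%R < +oo)%E) ->
  (* c <= 0 *)
  (forall x t, c x t <= 0) ->
  (* rho, sigma: continuous strictly positive densities of measures in \mathbb{M}_nu *)
  {within (D `*` `]0, T[%classic), continuous (fun z : 'rV[R]_d * R => rho z.1 z.2)} ->
  {within (D `*` `]0, T[%classic), continuous (fun z : 'rV[R]_d * R => sigma z.1 z.2)} ->
  (forall x t, D x -> 0 < t < T -> 0 < rho x t) ->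
  (forall x t, D x -> 0 < t < T -> 0 < sigma x t) ->
  MMnu leb T D Dk nu a b c rho ->
  MMnu leb T D Dk nu a b c sigma ->
  (* mass identities *)
  {ae lebesgue_measure, forall t, 0 < t < T ->
     (\int[leb]_(x in (D : set (Rd R d))) (rho x t)%:E
       = nu D + dint leb D [set` `]0, t[%R] (fun x s => c x s * rho x s)%R)%E} ->
  {ae lebesgue_measure, forall t, 0 < t < T ->
     (\int[leb]_(x in (D : set (Rd R d))) (sigma x t)%:E
       <= nu D + dint leb D [set` `]0, t[%R] (fun x s => c x s * sigma x s)%R)%E} ->
  (* exponential moment condition, v = sigma / rho *)
  (forall lambda : R, 0 < lambda ->
     {ae lebesgue_measure, forall t, 0 < t < T ->
        (\int[leb]_(x in (D : set (Rd R d)))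
            (expR (lambda * (1 - sigma x t / rho x t)) * rho x t)%R%:E <= 1)%E}) ->
  forall x t, D x -> 0 < t < T -> sigma x t = rho x t.
Proof.
move=> T0 oD hDk hDk2 hDk3 hleb hnu1 hnuD ma mb mc asym H1 H2 hp hbp hcp c0
  hcr hcs rpos spos Mr Ms massr masss hexp.
have oA := @openDT _ _ D T oD.
rewrite (continuous_open_subspace _ oA) in hcr.
rewrite (continuous_open_subspace _ oA) in hcs.
have inA : forall x0 t0, D x0 -> 0 < t0 < T -> (D `*` `]0, T[%classic) (x0, t0).
  by move=> x0 t0 Dx0 ht0; split => //=; rewrite in_itv /= ht0.
have nearA : forall x0 t0, D x0 -> 0 < t0 < T ->
    \forall z \near (x0, t0), (D `*` `]0, T[%classic) z.
  move=> x0 t0 Dx0 ht0; move: oA; rewrite openE => /(_ (x0, t0)); apply.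
  exact: inA.
have cr : forall x0 t0, D x0 -> 0 < t0 < T ->
    {for (x0, t0), continuous (fun z : 'rV[R]_d * R => rho z.1 z.2)}.
  by move=> x0 t0 Dx0 ht0; apply: hcr; rewrite inE; exact: inA.
have cs : forall x0 t0, D x0 -> 0 < t0 < T ->
    {for (x0, t0), continuous (fun z : 'rV[R]_d * R => sigma z.1 z.2)}.
  by move=> x0 t0 Dx0 ht0; apply: hcs; rewrite inE; exact: inA.
have mD : measurable (D : set (Rd R d)) := open_mRd oD.
have inbox : forall x0 e (y : 'rV[R]_d), y \in box x0 e -> forall i, `|y 0 i - x0 0 i| <= e.
  move=> x0 e y /set_mem yb i; have /andP[h1 h2] := yb i.
  by rewrite ler_norml; apply/andP; split; lra.
have cbox : forall (x0 : 'rV[R]_d) (e : R), 0 < e -> forall i, `|x0 0 i - x0 0 i| <= e.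
  by move=> x0 e e0 i; rewrite subrr normr0 ltW.
have step1 : forall x t, D x -> 0 < t < T -> rho x t <= sigma x t.
  move=> x0 t0 Dx0 ht0; rewrite leNgt; apply/negP => lt0.
  pose al := (rho x0 t0 - sigma x0 t0) / 2.
  have al0 : 0 < al by rewrite divr_gt0 // subr_gt0.
  have cG : {for (x0, t0), continuous (fun z : 'rV[R]_d * R => rho z.1 z.2 - sigma z.1 z.2)}.
    exact: cvgB (cr _ _ Dx0 ht0) (cs _ _ Dx0 ht0).
  have nG := cvgr_gt _ cG al (_ : al < rho x0 t0 - sigma x0 t0).
  have {nG}nG : \forall z \near (x0, t0), al < rho z.1 z.2 - sigma z.1 z.2.
    apply: nG; rewrite /al; lra.
  have nP : \forall z \near (x0, t0),
      (D `*` `]0, T[%classic) z /\ al < rho z.1 z.2 - sigma z.1 z.2.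
    by apply: filterS2 (nearA _ _ Dx0 ht0) nG => z h1 h2; split.
  have [e e0 He] := near_box nP.
  set m := (e *+ 2) ^+ d.
  have m0 : 0 < m by rewrite exprn_gt0 // pmulrn_rgt0.
  pose lam := 2 / (al * m).
  have lam0 : 0 < lam by rewrite divr_gt0 // mulr_gt0.
  have [t [ht Ht]] := ae_itv t0 e0 (hexp lam lam0).
  have [[_ /=] ] := He x0 t (cbox x0 e e0) ht.
  rewrite in_itv /= => tT _.
  have := Ht tT; apply/negP; rewrite -ltNge.
  have Bsub : box x0 e `<=` D.
    move=> y yb; have tt0 : `|t0 - t0| < e by rewrite subrr normr0.
    by have [[]] := He y t0 (inbox _ _ _ (mem_set yb)) tt0.
  apply: (@lt_le_trans _ _ (\int[leb]_(y in (D : set (Rd R d))) ((lam * al) * \1_(box x0 e) y)%:E)%E).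
  - rewrite (eq_integral (fun y : Rd R d => (lam * al)%:E * (\1_(box x0 e) y)%:E)%E); last first.
      by move=> y _; rewrite EFinM.
    have k0 : 0 <= lam * al by rewrite ltW // mulr_gt0.
    have mi : measurable_fun (D : set (Rd R d)) (fun y : Rd R d => (\1_(box x0 e) y : R)%:E).
      by apply: measurableT_comp => //; exact: measurable_indic (mbox x0 e).
    have i0 : forall y : Rd R d, D y -> (0 <= (\1_(box x0 e) y : R)%:E)%E.
      by move=> y _; rewrite lee_fin indicE.
    rewrite (ge0_integralZl_EFin leb mD i0 mi k0).
    rewrite integral_indic //; last exact: mbox.
    rewrite setIidl // leb_box // -EFinM lte_fin /lam -/m.
    have h2 : 2 / (al * m) * al * m = 2.
      by field; rewrite !gt_eqF.
    by rewrite h2; lra.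
  - apply: le_integral_nm => y Dy; rewrite lee_fin indicE.
    have rp : 0 < rho y t by apply: rpos.
    case: (boolP (y \in box x0 e)) => yb; last first.
      by rewrite mulr0 mulr_ge0 // ?expR_ge0 // ltW.
    rewrite mulr1.
    have [_ /= hal] := He y t (inbox _ _ _ yb) ht.
    have e1 : lam * (1 - sigma y t / rho y t) * rho y t = lam * (rho y t - sigma y t).
      by field; rewrite gt_eqF.
    apply: (@le_trans _ _ (lam * (rho y t - sigma y t))).
      by rewrite ler_pM2l // ltW.
    rewrite -e1 ler_pM2r //.
    apply: le_trans (expR_ge1Dx _); lra.
have nuD : (nu (D : set (Rd R d)) <= 1)%E.
  rewrite -hnu1; apply: le_measure; rewrite ?inE //.
have dintle : forall (f g : 'rV[R]_d -> R -> R) t,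
    (forall y s, D y -> 0 < s < t -> f y s <= g y s) ->
    (dint leb D [set` `]0, t[%R] f <= dint leb D [set` `]0, t[%R] g)%E.
  move=> f g t fg; rewrite /dint; apply: le_integral_nm => s /=; rewrite in_itv /= => hs.
  by apply: le_integral_nm => y Dy; rewrite lee_fin; exact: fg.
have dint0 : forall I, dint leb D I (fun _ _ => 0) = 0%E.
  by move=> I; rewrite /dint; apply: integral0_eq => s _; exact: integral0_eq.
have step3 : forall x t, D x -> 0 < t < T -> sigma x t <= rho x t.
  move=> x0 t0 Dx0 ht0; rewrite leNgt; apply/negP => lt0.
  pose al := (sigma x0 t0 - rho x0 t0) / 2.
  have al0 : 0 < al by rewrite divr_gt0 // subr_gt0.
  have cG : {for (x0, t0), continuous (fun z : 'rV[R]_d * R => sigma z.1 z.2 - rho z.1 z.2)}.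
    exact: cvgB (cs _ _ Dx0 ht0) (cr _ _ Dx0 ht0).
  have nG := cvgr_gt _ cG al (_ : al < sigma x0 t0 - rho x0 t0).
  have {nG}nG : \forall z \near (x0, t0), al < sigma z.1 z.2 - rho z.1 z.2.
    apply: nG; rewrite /al; lra.
  have nP : \forall z \near (x0, t0),
      (D `*` `]0, T[%classic) z /\ al < sigma z.1 z.2 - rho z.1 z.2.
    by apply: filterS2 (nearA _ _ Dx0 ht0) nG => z h1 h2; split.
  have [e e0 He] := near_box nP.
  set m := (e *+ 2) ^+ d.
  have m0 : 0 < m by rewrite exprn_gt0 // pmulrn_rgt0.
  have aeF := ae_filter_ringOfSetsType (@lebesgue_measure R).
  have hI := @filterI _ (almost_everywhere (@lebesgue_measure R)) aeF _ _ massr masss.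
  have [t [ht [Hr Hs]]] := ae_itv' t0 e0 hI.
  have [[_ /=] ] := He x0 t (cbox x0 e e0) ht.
  rewrite in_itv /= => tT _.
  have {Hr}Hr := Hr tT; have {Hs}Hs := Hs tT.
  have Bsub : box x0 e `<=` D.
    move=> y yb; have tt0 : `|t0 - t0| < e by rewrite subrr normr0.
    by have [[]] := He y t0 (inbox _ _ _ (mem_set yb)) tt0.
  set Ir := (\int[leb]_(x in (D : set (Rd R d))) (rho x t)%:E)%E in Hr.
  set Is := (\int[leb]_(x in (D : set (Rd R d))) (sigma x t)%:E)%E in Hs.
  have tT' : t < T by case/andP: tT.
  have Isr : (Is <= Ir)%E.
    apply: le_trans Hs _; rewrite Hr; apply: leeD => //; apply: dintle => y s Dy hs.
    apply: ler_wnM2l; first exact: c0.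
    apply: step1 => //; case/andP: hs => ? ?; apply/andP; split => //; lra.
  have Ir1 : (Ir <= 1)%E.
    rewrite Hr -(adde0 1%E); apply: leeD => //; rewrite -(dint0 [set` `]0, t[%R]).
    apply: dintle => y s Dy hs; apply: mulr_le0_ge0; first exact: c0.
    apply/ltW/rpos => //; case/andP: hs => ? ?; apply/andP; split => //; lra.
  have Ir0 : (0 <= Ir)%E.
    by apply: integral_ge0 => y Dy; rewrite lee_fin ltW // rpos.
  have Irfin : Ir \is a fin_num by rewrite ge0_fin_numE // (le_lt_trans Ir1) // ltry.
  have mr : measurable_fun (D : set (Rd R d)) (fun y : Rd R d => (rho y t)%:E).
    apply: measurableT_comp => //; apply: (cont_meas oD) => y Dy.
    exact: (cvg_sec (cr y t Dy tT)).
  have mi : measurable_fun (D : set (Rd R d))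
      (fun y : Rd R d => (al * (\1_(box x0 e) y : R))%:E).
    apply: measurableT_comp => //; apply: measurable_funM => //.
    exact: measurable_indic (mbox x0 e).
  have I2 : (\int[leb]_(y in (D : set (Rd R d))) (al * (\1_(box x0 e) y : R))%:E = (al * m)%:E)%E.
    rewrite (eq_integral (fun y : Rd R d => al%:E * (\1_(box x0 e) y : R)%:E)%E); last first.
      by move=> y _; rewrite EFinM.
    have k0 : 0 <= al by rewrite ltW.
    have mi' : measurable_fun (D : set (Rd R d)) (fun y : Rd R d => (\1_(box x0 e) y : R)%:E).
      by apply: measurableT_comp => //; exact: measurable_indic (mbox x0 e).
    have i0 : forall y : Rd R d, D y -> (0 <= (\1_(box x0 e) y : R)%:E)%E.
      by move=> y _; rewrite lee_fin indicE.
    rewrite (ge0_integralZl_EFin leb mD i0 mi' k0).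
    rewrite integral_indic //; last exact: mbox.
    by rewrite setIidl // leb_box // -EFinM.
  have low : (Ir + (al * m)%:E <= Is)%E.
    have r0 : forall y : Rd R d, D y -> (0 <= (rho y t)%:E)%E.
      by move=> y Dy; rewrite lee_fin ltW // rpos.
    have i2 : forall y : Rd R d, D y -> (0 <= (al * (\1_(box x0 e) y : R))%:E)%E.
      by move=> y _; rewrite lee_fin mulr_ge0 // ?indicE // ltW.
    rewrite /Ir -I2 -(ge0_integralD leb mD r0 mr i2 mi).
    apply: le_integral_nm => y Dy; rewrite -EFinD lee_fin indicE.
    case: (boolP (y \in box x0 e)) => yb.
      have [_ /= hal] := He y t (inbox _ _ _ yb) ht.
      rewrite mulr1; lra.
    by rewrite mulr0 addr0; apply: step1.
  have := le_trans low Isr.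
  rewrite -(fineK Irfin) -EFinD lee_fin.
  have : 0 < al * m by rewrite mulr_gt0.
  lra.
move=> x t Dx ht; apply/eqP; rewrite eq_le (step3 x t Dx ht) (step1 x t Dx ht).
by [].
Qed.
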